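(* Let $f(n,k)={n\brack k}{n+k\brack k}$. For all integers $n,i,k\ge0$, as an identity of polynomials in $q$, \[ f(n,i)\,f(n,k)=\sum_{j\ge0} q^{(n-j)(k+i-j)}\,{i+k\brack i}{j\brack j-i,\,j-k,\,i+k-j}\, f(n,j). \] Consequently (taking $B(k,j,i)=-(k+i-j)j$ and $C(k,j,r,n)=(rk-j)n$), defining $P^{(1)}_{k,k}=1$, $P^{(1)}_{k,j}=0$ for $j\ne k$ and $P^{(r+1)}_{k,j}=\sum_i q^{-(k+i-j)j}{i+k\brack i}{j\brack j-i,\,j-k,\,i+k-j}P^{(r)}_{k,i}$, one has $f(n,k)^r=\sum_j q^{(rk-j)n}f(n,j)P^{(r)}_{k,j}$ for all $n,k\ge0$, $r\ge1$.
   Context: $q$ is an indeterminate; $(q)_0=1$, $(q)_m=(1-q)(1-q^2)\cdots(1-q^m)$. The $q$-binomial ${n\brack k}=\frac{(q)_n}{(q)_k(q)_{n-k}}$ if $0\le k\le n$ and $0$ otherwise. The $q$-multinomial ${m\brack a,b,c}=\frac{(q)_m}{(q)_a(q)_b(q)_c}$ if $a,b,c\ge0$ and $a+b+c=m$, and $0$ otherwise. *)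

(* Defs.v *)
(* Everything lives in the field of rational functions Q(q),
   realised as {fraction {poly int}} with q = 'X. *)
From HB Require Import structures.
From mathcomp Require Import all_boot all_order all_algebra.
Set Implicit Arguments. Unset Strict Implicit. Unset Printing Implicit Defensive.
Import Order.TTheory GRing.Theory Num.Theory.
Local Open Scope ring_scope.

Notation RF := {fraction {poly int}}.

Definition q : RF := FracField.tofrac 'X.

Definition qpoch (m : nat) : RF := \prod_(1 <= i < m.+1) (1 - q ^+ i).

Definition qbinom (n k : nat) : RF :=
  if (k <= n)%N then qpoch n / (qpoch k * qpoch (n - k)) else 0.

Definition qmultinom (m : nat) (a b c : int) : RF :=
  if [&& 0 <= a, 0 <= b, 0 <= c & a + b + c == m%:Z]
  then qpoch m / (qpoch `|a|%N * qpoch `|b|%N * qpoch `|c|%N) else 0.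

Definition f (n k : nat) : RF := qbinom n k * qbinom (n + k) k.

(* Paux r k j = P^{(r+1)}_{k,j}. In the recursion the sum over i >= 0 is
   restricted to i <= j: for i > j the multinomial factor vanishes (j - i < 0). *)
Fixpoint Paux (r : nat) (k j : nat) : RF :=
  match r with
  | 0 => (j == k)%:R
  | r'.+1 => \sum_(i < j.+1)
      q ^ (- ((k%:Z + i%:Z - j%:Z) * j%:Z)) * qbinom (i + k) i
        * qmultinom j (j%:Z - i%:Z) (j%:Z - k%:Z) (i%:Z + k%:Z - j%:Z)
        * Paux r' k i
  end.

(* P^{(r)}_{k,j}, meaningful for r >= 1 *)
Definition P (r k j : nat) : RF := Paux r.-1 k j.

(* Main.v *)
Require Import Defs.
From HB Require Import structures.
From mathcomp Require Import all_boot all_order all_algebra.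
From mathcomp Require Import ring lra zify.
Import Order.TTheory GRing.Theory Num.Theory.
Local Open Scope ring_scope.

Lemma q_neq0 : q != 0.
Proof. by rewrite /q tofrac_eq0 polyX_eq0. Qed.

Lemma qzn (m : nat) : q ^ (m%:Z) = q ^+ m.
Proof. by []. Qed.

Lemma qzB (m n : nat) : q ^ (m%:Z - n%:Z) = q ^+ m / q ^+ n.
Proof. by rewrite expfzDr ?q_neq0 // -invr_expz. Qed.

Lemma qXn_neq1 (m : nat) : (0 < m)%N -> 1 - q ^+ m != 0.
Proof.
move=> m0; rewrite /q -tofracXn -tofrac1 -tofracB tofrac_eq0.
apply/eqP => /(congr1 (fun p : {poly int} => p`_0)).
rewrite coefB coef1 coefXn. case: m m0 => [|m] // _ /=. rewrite subr0. rewrite coef0 => /eqP; exact/negP/oner_neq0.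
Qed.

Lemma qpoch0 : qpoch 0 = 1.
Proof. by rewrite /qpoch big_geq. Qed.

Lemma qpochS m : qpoch m.+1 = qpoch m * (1 - q ^+ m.+1).
Proof. by rewrite /qpoch big_nat_recr. Qed.

Lemma qpoch_neq0 m : qpoch m != 0.
Proof.
elim: m => [|m IH]; first by rewrite qpoch0; exact: oner_neq0.
rewrite qpochS; apply: mulf_neq0; [exact: IH | exact: qXn_neq1].
Qed.
Definition rinv (m : int) : RF := if (0 <= m) then (qpoch `|m|%N)^-1 else 0.

Lemma rinv_neg m : m < 0 -> rinv m = 0.
Proof. by rewrite /rinv ltNge => /negbTE ->. Qed.

Lemma rinv0 : rinv 0 = 1.
Proof. by rewrite /rinv lexx /= qpoch0 invr1. Qed.

Lemma rinv_rec (m m' : int) : m' = m + 1 -> rinv m = rinv m' * (1 - q ^ m').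
Proof.
move=> ->; case: m => a.
  have -> : (Posz a + 1)%R = Posz a.+1 by lia.
  rewrite /rinv /=.
  rewrite qpochS invfM -mulrA mulVf ?mulr1 //; exact: qXn_neq1.
case: a => [|a].
  rewrite (_ : Negz 0 + 1 = 0); last by []. rewrite expr0z subrr mulr0 rinv_neg; last by []. reflexivity.
rewrite !rinv_neg ?mul0r //; lia.
Qed.

Lemma qmultE (j : nat) (a b c : int) : a + b + c = j%:Z ->
  qmultinom j a b c = qpoch j * rinv a * rinv b * rinv c.
Proof.
move=> H; rewrite /qmultinom /rinv H eqxx.
case: (0 <= a); case: (0 <= b); case: (0 <= c); rewrite /=.
all: try (rewrite ?mulr0 ?mul0r; reflexivity).
rewrite !invfM !mulrA; reflexivity.
Qed.

Definition Cc (i k j : nat) : RF :=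
  qbinom (i + k) i * qmultinom j (j%:Z - i%:Z) (j%:Z - k%:Z) (i%:Z + k%:Z - j%:Z).

Lemma CcE i k j : Cc i k j = qpoch (i + k) / (qpoch i * qpoch k) * qpoch j
   * rinv (j%:Z - i%:Z) * rinv (j%:Z - k%:Z) * rinv (i%:Z + k%:Z - j%:Z).
Proof.
rewrite /Cc qmultE; last by lia.
rewrite /qbinom leq_addr addKn; ring.
Qed.

Lemma f_gt n j : (n < j)%N -> f n j = 0.
Proof. move=> H; rewrite /f /qbinom leqNgt H /= mul0r; reflexivity. Qed.

Lemma f_0 n : f n 0 = 1.
Proof.
rewrite /f /qbinom !leq0n !subn0 addn0 qpoch0 mul1r divff ?mulr1; [reflexivity | exact: qpoch_neq0].
Qed.

Lemma alg_frec (F : fieldType) (Qn Qj Qd Qnj u w v : F) :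
  Qn != 0 -> Qj != 0 -> Qd != 0 -> 1 - u != 0 -> 1 - w != 0 ->
  Qn / (Qj * (1 - u) * Qd) * (Qnj * (1 - v) / (Qj * (1 - u) * Qn)) * (1 - u) ^+ 2
  = Qn / (Qj * (Qd * (1 - w))) * (Qnj / (Qj * Qn)) * ((1 - w) * (1 - v)).
Proof. by move=> *; field; apply/and5P. Qed.

Lemma f_rec n j : f n j.+1 * (1 - q ^+ j.+1) ^+ 2
  = f n j * ((1 - q ^ (n%:Z - j%:Z)) * (1 - q ^+ (n + j)%N.+1)).
Proof.
case: (ltngtP j n) => H.
- have E : (n%:Z - j%:Z) = ((n - j.+1).+1)%:Z by lia.
  rewrite E /f /qbinom H (ltnW H) leq_addl leq_addl addnK addnK addnS.
  rewrite -[(n - j)%N](subnSK H) !qpochS qzn.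
  have h1 := qpoch_neq0 j; have h2 := qpoch_neq0 n; have h3 := qpoch_neq0 (n - j.+1).
  have h4 := qpoch_neq0 (n + j).
  have h5 : 1 - q ^+ j.+1 != 0 by exact: qXn_neq1.
  have h6 : 1 - q ^+ (n - j.+1).+1 != 0 by exact: qXn_neq1.
  have L := (@alg_frec _ (qpoch n) (qpoch j) (qpoch (n - j.+1)) (qpoch (n + j)%N) (q ^+ j.+1) (q ^+ (n - j.+1)%N.+1) (q ^+ (n + j)%N.+1) h2 h1 h3 h5 h6). exact: L.
- by rewrite !f_gt ?mul0r //; apply: ltnW.
- by rewrite H /f /qbinom ltnn subrr expr0z subrr !mul0r !mulr0.
Qed.

Definition D (j k : nat) : RF := q ^ (- j%:Z) + q ^+ j.+1 - q ^ (- k%:Z) - q ^+ k.+1.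

Lemma gen_step (R : comPzRingType) (a b c d e g : R) : d * g = c * e ->
  a * ((1 - b * d) * (1 - b * g)) = a * ((1 - b * c) * (1 - b * e)) + b * (c + e - d - g) * a.
Proof.
move=> H; transitivity (a * (1 - b * d - b * g + b ^+ 2 * (d * g))); first ring.
rewrite H; ring.
Qed.

Lemma qinvS k : q ^ (- k%:Z) * q ^+ k.+1 = q.
Proof.
rewrite -qzn -expfzDr ?q_neq0 //.
have -> : (- k%:Z + k.+1%:Z) = 1 by lia.
exact: expr1z.
Qed.

Lemma f_step n j k :
  f n j * ((1 - q ^ (n%:Z - k%:Z)) * (1 - q ^+ (n + k)%N.+1))
  = f n j.+1 * (1 - q ^+ j.+1) ^+ 2 + q ^+ n * D j k * f n j.
Proof.
rewrite f_rec /D.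
rewrite !(expfzDr _ _ q_neq0) -!addnS !exprD !qzn.
apply: gen_step; rewrite !qinvS; reflexivity.
Qed.

Lemma qzN (m : nat) : q ^ (- m%:Z) = (q ^+ m)^-1.
Proof. by rewrite -invr_expz. Qed.

Lemma gen_core (F : fieldType) (A B C E r1 r2 r3 x y t z : F) :
  B != 0 -> C != 0 -> 1 - z * y != 0 -> x != 0 -> y != 0 -> t != 0 -> z != 0 ->
  A * (1 - z * (x * y)) / (B * (C * (1 - z * y))) * (E * (1 - z * t)) * r1 *
  (r2 * (1 - z * t / y)) * r3 * ((1 - z * y) * ((1 - z * y) * 1)) =
  y * x / t *
  (A / (B * C) * E * (r1 * (1 - z * t / x)) * (r2 * (1 - z * t / y)) * r3) *
  ((1 - z * t) * ((1 - z * t) * 1)) +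
  z * t * ((z * t)^-1 + z * (z * t) - y^-1 - z * y) *
  (A / (B * C) * (E * (1 - z * t)) * r1 * r2 * (r3 * (1 - x * y / t))).
Proof. by move=> *; field; repeat (apply/andP; split). Qed.

Lemma core i k j :
  Cc i k.+1 j.+1 * (1 - q ^+ k.+1) ^+ 2
  = q ^ ((k + i)%N%:Z - j%:Z) * Cc i k j * (1 - q ^+ j.+1) ^+ 2
    + q ^+ j.+1 * D j.+1 k * Cc i k j.+1.
Proof.
rewrite !CcE /D addnS !qpochS.
rewrite [rinv (j.+1%:Z - k.+1%:Z)](@rinv_rec _ (j.+1%:Z - k%:Z)); last by lia.
rewrite [rinv (j%:Z - i%:Z)](@rinv_rec _ (j.+1%:Z - i%:Z)); last by lia.
rewrite [rinv (j%:Z - k%:Z)](@rinv_rec _ (j.+1%:Z - k%:Z)); last by lia.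
rewrite [rinv (i%:Z + k%:Z - j.+1%:Z)](@rinv_rec _ (i%:Z + k%:Z - j%:Z)); last by lia.
have -> : (i%:Z + k.+1%:Z - j.+1%:Z) = (i%:Z + k%:Z - j%:Z) by lia.
have -> : (i%:Z + k%:Z - j%:Z) = ((i + k)%N%:Z - j%:Z) by lia.
rewrite !qzB !qzN !exprS !exprD !expr0.
have hz := q_neq0.
apply: gen_core.
- exact: qpoch_neq0.
- exact: qpoch_neq0.
- rewrite -exprS; exact: qXn_neq1.
- exact: expf_neq0.
- exact: expf_neq0.
- exact: expf_neq0.
- exact: hz.
Qed.

Definition T (n i k j : nat) : RF :=
  q ^ ((n%:Z - j%:Z) * (k%:Z + i%:Z - j%:Z)) * Cc i k j.

Lemma gen_T (R : comPzRingType) (E X Y Z a b c2 c3 qB qn Dv : R) :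
  qB * qn = E * b -> X * c2 = a * Y * c3 + b * Dv * Z ->
  E * X * c2 = E * a * Y * c3 + qB * Z * (qn * Dv).
Proof.
move=> H1 H2.
transitivity (E * (X * c2)); first ring.
rewrite H2.
transitivity (E * a * Y * c3 + (E * b) * Dv * Z); first ring.
rewrite -H1; ring.
Qed.

Lemma coef_S n i k j :
  T n i k.+1 j.+1 * (1 - q ^+ k.+1) ^+ 2
  = T n i k j * (1 - q ^+ j.+1) ^+ 2 + T n i k j.+1 * (q ^+ n * D j.+1 k).
Proof.
rewrite /T.
set e1 := ((n%:Z - j.+1%:Z) * (k.+1%:Z + i%:Z - j.+1%:Z)).
have E2 : q ^ ((n%:Z - j%:Z) * (k%:Z + i%:Z - j%:Z)) = q ^ e1 * q ^ ((k + i)%N%:Z - j%:Z).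
  rewrite -expfzDr; last exact: q_neq0.
  congr (q ^ _); rewrite /e1; lia.
have E3 : q ^ ((n%:Z - j.+1%:Z) * (k%:Z + i%:Z - j.+1%:Z)) * q ^+ n = q ^ e1 * q ^+ j.+1.
  rewrite -!qzn -!expfzDr; try exact: q_neq0.
  congr (q ^ _); rewrite /e1; lia.
rewrite E2.
apply: (@gen_T _ (q ^ e1) (Cc i k.+1 j.+1) (Cc i k j) (Cc i k j.+1) (q ^ ((k + i)%N%:Z - j%:Z)) (q ^+ j.+1) ((1 - q ^+ k.+1) ^+ 2) ((1 - q ^+ j.+1) ^+ 2) (q ^ ((n%:Z - j.+1%:Z) * (k%:Z + i%:Z - j.+1%:Z))) (q ^+ n) (D j.+1 k) E3).
exact: core.
Qed.

Lemma Cc0 i k : Cc i k.+1 0 = 0.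
Proof.
rewrite CcE [rinv (0%:Z - k.+1%:Z)]rinv_neg; last by lia.
rewrite mulr0 mul0r; reflexivity.
Qed.

Lemma gen_D0 (R : zmodType) (a b : R) : a + b - a - b = 0.
Proof. by rewrite (addrC a b) addrK subrr. Qed.

Lemma coef_0 n i k :
  T n i k.+1 0 * (1 - q ^+ k.+1) ^+ 2 = T n i k 0 * (q ^+ n * D 0 k).
Proof.
rewrite /T Cc0 mulr0 mul0r.
case: k => [|k].
  rewrite /D gen_D0 !mulr0; reflexivity.
rewrite Cc0 mulr0 mul0r; reflexivity.
Qed.

Lemma gen_b (F : fieldType) (a : F) : a != 0 -> 1 * (a / (a * 1) * a * 1 / a * 1) = 1.
Proof. by move=> h; field. Qed.

Lemma T_base n i j : T n i 0 j = (j == i)%:R.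
Proof.
rewrite /T CcE.
case: (ltngtP j i) => H.
- rewrite [rinv (j%:Z - i%:Z)]rinv_neg; last by lia.
  rewrite mulr0n !(mulr0, mul0r); reflexivity.
- rewrite [rinv (i%:Z + 0%:Z - j%:Z)]rinv_neg; last by lia.
  rewrite mulr0n !(mulr0, mul0r); reflexivity.
- rewrite H mulr1n.
  have -> : ((n%:Z - i%:Z) * (0%:Z + i%:Z - i%:Z)) = 0 by lia.
  have -> : (i%:Z - i%:Z) = 0 by lia.
  have -> : (i%:Z + 0%:Z - i%:Z) = 0 by lia.
  have -> : (i%:Z - 0%:Z) = i%:Z by lia.
  rewrite rinv0 addn0 qpoch0 expr0z /rinv /=.
  rewrite mul1r !mulr1 (divff (qpoch_neq0 i)) mul1r (divff (qpoch_neq0 i)); reflexivity.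
Qed.

Lemma sum_delta (F : nat -> RF) n i : ((n < i)%N -> F i = 0) ->
  \sum_(0 <= j < n.+1) (j == i)%:R * F j = F i.
Proof.
move=> HF; rewrite big_mkord.
case: (leqP i n) => H.
  have Hi : (i < n.+1)%N by [].
  rewrite (bigD1 (Ordinal Hi)) /=; last by [].
  rewrite eqxx mul1r big1 ?addr0; first reflexivity.
  move=> j; rewrite -val_eqE /= => /negbTE ->; rewrite mul0r; reflexivity.
rewrite big1 ?HF //.
move=> j _; have : (j : nat) != i by rewrite neq_ltn (leq_ltn_trans _ H) // -ltnS.
move=> /negbTE ->; rewrite mul0r; reflexivity.
Qed.

Lemma gen_dist (R : comPzRingType) (t f1 c qn Dv f0 : R) :
  t * (f1 * c + qn * Dv * f0) = t * c * f1 + t * (qn * Dv) * f0.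
Proof. ring. Qed.

Lemma part1 n k : forall i, f n i * f n k = \sum_(0 <= j < n.+1) T n i k j * f n j.
Proof.
elim: k => [|k IH] i.
  rewrite f_0 mulr1.
  under eq_bigr => j _ do rewrite T_base.
  by rewrite sum_delta //; move=> H; rewrite f_gt.
have c2 : (1 - q ^+ k.+1) ^+ 2 != 0 by rewrite expf_neq0 //; exact: qXn_neq1.
apply: (mulIf c2).
rewrite -mulrA f_rec mulrA IH mulr_suml.
under eq_bigr => j _ do rewrite -mulrA f_step gen_dist.
rewrite big_split /=.
rewrite big_nat_recr //= [in X in X + _]f_gt // mulr0 addr0.
rewrite big_nat_recl //=.
rewrite mulr_suml big_nat_recl //=.
rewrite [T n i k.+1 0 * _ * _]mulrAC coef_0.
under [in RHS]eq_bigr => j _ do rewrite mulrAC coef_S mulrDl.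
rewrite big_split /= addrCA; reflexivity.
Qed.

Lemma Cc_gt i k j : (j < i)%N -> Cc i k j = 0.
Proof.
move=> H; rewrite CcE [rinv (j%:Z - i%:Z)]rinv_neg; last by lia.
rewrite !(mulr0, mul0r); reflexivity.
Qed.

Lemma gen_P (R : comPzRingType) (a b c d C1 C2 P F : R) : a * b = c * d ->
  a * P * (b * (C1 * C2) * F) = c * F * (d * C1 * C2 * P).
Proof.
move=> H; transitivity ((a * b) * C1 * C2 * P * F); first ring.
rewrite H; ring.
Qed.

Lemma gen_re (R : comPzRingType) (a b c d : R) : a * b * c * d = a * c * (b * d).
Proof. ring. Qed.

Lemma part2 n k r : f n k ^+ r.+1 =
  \sum_(0 <= j < n.+1) q ^ ((r.+1%:Z * k%:Z - j%:Z) * n%:Z) * f n j * Paux r k j.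
Proof.
elim: r => [|r IH].
  rewrite expr1.
  have -> : \sum_(0 <= j < n.+1) q ^ ((1%:Z * k%:Z - j%:Z) * n%:Z) * f n j * Paux 0 k j
      = \sum_(0 <= j < n.+1) (j == k)%:R * f n j.
    apply: eq_bigr => j _; rewrite /=; case: (eqVneq j k) => [->|_].
      have -> : ((1%:Z * k%:Z - k%:Z) * n%:Z) = 0 by lia.
      rewrite expr0z /= mulr1n mulr1 mul1r; reflexivity.
    rewrite /= mulr0n mulr0 mul0r; reflexivity.
  by rewrite sum_delta //; move=> H; rewrite f_gt.
rewrite exprSr IH mulr_suml.
under eq_bigr => i _ do rewrite gen_re part1 mulr_sumr.
rewrite exchange_big /=.
apply: eq_big_nat => j /andP [_ Hj].
rewrite /=.
rewrite -(big_mkord xpredT (fun i => q ^ (- ((k%:Z + i%:Z - j%:Z) * j%:Z)) * qbinom (i + k) i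
        * qmultinom j (j%:Z - i%:Z) (j%:Z - k%:Z) (i%:Z + k%:Z - j%:Z) * Paux r k i)).
rewrite mulr_sumr.
rewrite (big_cat_nat _ (n := j.+1)) //=.
rewrite [X in _ + X]big_nat_cond [X in _ + X]big1 ?addr0.
  apply: eq_big_nat => i /andP [_ Hi].
  rewrite /T /Cc.
  apply: gen_P.
  rewrite -!expfzDr; try exact: q_neq0.
  congr (q ^ _); lia.
move=> i /andP [/andP [Hi _] _].
rewrite /T Cc_gt // !(mulr0, mul0r); reflexivity.
Qed.

Theorem mainTheorem6 :
  (forall n i k : nat,
     f n i * f n k =
     \sum_(j < n.+1)
       q ^ ((n%:Z - j%:Z) * (k%:Z + i%:Z - j%:Z)) * qbinom (i + k) i
       * qmultinom j (j%:Z - i%:Z) (j%:Z - k%:Z) (i%:Z + k%:Z - j%:Z)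
       * f n j)
  /\
  (forall n k r : nat, (1 <= r)%N ->
     f n k ^+ r =
     \sum_(j < n.+1) q ^ ((r%:Z * k%:Z - j%:Z) * n%:Z) * f n j * P r k j).
Proof.
split.
  move=> n i k; rewrite part1 big_mkord; apply: eq_bigr => j _.
  rewrite /T /Cc !mulrA; reflexivity.
move=> n k [|r] // _.
rewrite part2 big_mkord; apply: eq_bigr => j _.
rewrite /P; reflexivity.
Qed.
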